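(* A cyclic graph without a dominated vertex is isomorphic (as a directed graph) to $\overrightarrow{C_n^k}$ for some integers $0\le k<\frac12 n$. Consequently, every cyclic graph dismantles to an induced subgraph of the form $\overrightarrow{C_n^k}$.
   Context: A directed graph is a finite pair $(V,E)$, $E\subseteq V\times V$, with no loops and never both $(v,w),(w,v)\in E$; write $v\to w$. A cyclic graph is a directed graph whose vertices are arranged in a cyclic order $v_0\prec v_1\prec\cdots\prec v_{n-1}$ (indices mod $n$) such that whenever $v_i\to v_j$, either $j=i+1$ or both $v_i\to v_{j-1}$ and $v_{i+1}\to v_j$. For a vertex $v$, $N^-(\overrightarrow G,v)=\{w:w\to v\}$ and $N^-[\overrightarrow G,v]=N^-(\overrightarrow G,v)\cup\{v\}$. A vertex $v_i$ is dominated (by $v_{i+1}$) if $N^-(\overrightarrow G,v_{i+1})=N^-[\overrightarrow G,v_i]$. A cyclic graph $\overrightarrow G$ dismantles to an induced subgraph $\overrightarrow H$ if there is a sequence $\overrightarrow G=\overrightarrow G_0,\dots,\overrightarrow G_s=\overrightarrow H$ where each $\overrightarrow G_i$ is obtained from $\overrightarrow G_{i-1}$ (with the inherited cyclic order) by removing a dominated vertex. For integers $0\le k<n/2$, $\overrightarrow{C_n^k}$ is the directed graph on $\{0,\dots,n-1\}$ with $i\to j$ iff $0<(j-i)\bmod n\le k$. *)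

(* Defs.v *)
From mathcomp Require Import all_boot.
Set Implicit Arguments. Unset Strict Implicit. Unset Printing Implicit Defensive.

(* A cyclic graph with n vertices is represented on the vertex set 'I_n, the
   cyclic order being v_0 < v_1 < ... < v_(n-1) (indices mod n).  Induced
   subgraphs are given by subsets S of 'I_n and carry the inherited cyclic
   order, i.e. the elements of S listed increasingly, viewed as a cycle. *)

Definition digraph n (E : rel 'I_n) : Prop :=
  (forall x, ~~ E x x) /\ (forall x y, E x y -> ~~ E y x).

Definition cyc_seq n (S : {set 'I_n}) : seq 'I_n := [seq x <- enum 'I_n | x \in S].

Definition csucc n (S : {set 'I_n}) (v : 'I_n) : 'I_n := next (cyc_seq S) v.
Definition cpred n (S : {set 'I_n}) (v : 'I_n) : 'I_n := prev (cyc_seq S) v.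

Definition cyclic_graph n (E : rel 'I_n) (S : {set 'I_n}) : Prop :=
  forall x y, x \in S -> y \in S -> E x y ->
    y = csucc S x \/ (E x (cpred S y) /\ E (csucc S x) y).

Definition in_nbhd n (E : rel 'I_n) (S : {set 'I_n}) (v : 'I_n) : {set 'I_n} :=
  [set w in S | E w v].

Definition dominated n (E : rel 'I_n) (S : {set 'I_n}) (v : 'I_n) : Prop :=
  v \in S /\ in_nbhd E S (csucc S v) = v |: in_nbhd E S v.

Inductive dismantles n (E : rel 'I_n) : {set 'I_n} -> {set 'I_n} -> Prop :=
| dism_refl S : dismantles E S S
| dism_step S v T : dominated E S v -> dismantles E (S :\ v) T -> dismantles E S T.

Definition circ m (k : nat) (i j : 'I_m) : bool :=
  (0 < (j + (m - i)) %% m) && ((j + (m - i)) %% m <= k).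

(* Main.v *)
Require Import Defs.
From mathcomp Require Import all_boot zify.
From Stdlib Require Import Classical.
Set Implicit Arguments. Unset Strict Implicit.
Lemma cyc_enum n (S : {set 'I_n}) : cyc_seq S = enum S.
Proof. rewrite /cyc_seq enumT /enum_mem. rewrite /enum_mem /=. done. Qed.
Lemma sortS n (S : {set 'I_n}) : sorted (fun a b : 'I_n => a < b) (cyc_seq S).
Proof.
rewrite /cyc_seq. apply: sorted_filter. by move=> a b c; apply: ltn_trans.
have := iota_ltn_sorted 0 n. by rewrite -val_enum_ord sorted_map.
Qed.
Lemma uniqS n (S : {set 'I_n}) : uniq (cyc_seq S).
Proof. by rewrite cyc_enum enum_uniq. Qed.
Lemma memS n (S : {set 'I_n}) x : (x \in cyc_seq S) = (x \in S).
Proof. by rewrite cyc_enum mem_enum. Qed.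
Lemma monoS n (S : {set 'I_n}) x0 a b : a < size (cyc_seq S) -> b < size (cyc_seq S) ->
  (nth x0 (cyc_seq S) a < nth x0 (cyc_seq S) b) = (a < b).
Proof.
move=> Ha Hb; have H := @sorted_ltn_nth _ (fun a b : 'I_n => a < b) (fun y x z => @ltn_trans y x z) x0 _ (sortS S).
case: (ltngtP a b) => Hab.
- by apply: H.
- apply/negbTE; rewrite -leqNgt ltnW //. by apply: H.
- by rewrite Hab ltnn.
Qed.
Definition dist n (i j : 'I_n) := (j + (n - i)) %% n.
Lemma distE n (i j : 'I_n) : dist i j = if i <= j then j - i else j + n - i.
Proof.
have := ltn_ord i; have := ltn_ord j.
rewrite /dist; case: (leqP i j) => H Hj Hi.
  rewrite (_ : j + (n - i) = (j - i) + n); last by lia.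
  by rewrite modnDr modn_small //; lia.
by rewrite modn_small; lia.
Qed.
Lemma next_nth_uniq (T : eqType) (x0 : T) (s : seq T) i : uniq s -> i < size s ->
  next s (nth x0 s i) = nth x0 s (i.+1 %% size s).
Proof.
move=> Us Hi; rewrite next_nth mem_nth // index_uniq //.
case: s Us Hi => [|y p] //= Us Hi.
case: (ltnP i.+1 (size p).+1) => H.
  rewrite modn_small //=. by apply: set_nth_default.
have -> : i = size p by lia.
by rewrite modnn nth_default.
Qed.
Lemma prev_nth_uniq (T : eqType) (x0 : T) (s : seq T) i : uniq s -> i < size s ->
  prev s (nth x0 s i) = nth x0 s ((i + (size s).-1) %% size s).
Proof.
move=> Us Hi.
have Hj : (i + (size s).-1) %% size s < size s by apply: ltn_pmod; lia.
rewrite -[in LHS](_ : (((i + (size s).-1) %% size s).+1 %% size s) = i).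
  by rewrite -next_nth_uniq // prev_next.
rewrite -addn1 modnDml -addnA (_ : (size s).-1 + 1 = size s); last by lia.
by rewrite modnDr modn_small.
Qed.
Lemma csucc_in n (S : {set 'I_n}) x : x \in S -> csucc S x \in S.
Proof. by rewrite /csucc -!memS mem_next. Qed.
Lemma cpred_in n (S : {set 'I_n}) x : x \in S -> cpred S x \in S.
Proof. by rewrite /cpred -!memS mem_prev. Qed.
Lemma cpred_csucc n (S : {set 'I_n}) x : cpred S (csucc S x) = x.
Proof. by rewrite /cpred /csucc prev_next // uniqS. Qed.
Lemma csucc_cpred n (S : {set 'I_n}) x : csucc S (cpred S x) = x.
Proof. by rewrite /cpred /csucc next_prev // uniqS. Qed.

Lemma csucc_min n (S : {set 'I_n}) x z : x \in S -> z \in S -> z != x ->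
  csucc S x != x /\ dist x (csucc S x) <= dist x z.
Proof.
move=> xS zS zx.
have xs : x \in cyc_seq S by rewrite memS.
have zs : z \in cyc_seq S by rewrite memS.
set s := cyc_seq S in xs zs *.
have Us : uniq s by apply: uniqS.
have Hi : index x s < size s by rewrite index_mem.
have Hj : index z s < size s by rewrite index_mem.
have Ex := nth_index x xs. have Ez := nth_index x zs.
have Hij : index z s != index x s.
  by apply: contra zx => /eqP E; rewrite -Ez E Ex.
rewrite /csucc -/s -Ex next_nth_uniq //.
move: Hi Hj Hij Ex Ez zx.
set i := index x s; set j := index z s; move=> Hi Hj Hij Ex Ez zx.
have Hk : i.+1 %% size s < size s by apply: ltn_pmod; lia.
rewrite nth_uniq // -Ez distE distE.
have M : forall a b, a < size s -> b < size s -> (nth x s a < nth x s b <-> a < b).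
  by move=> a b Ha Hb; rewrite monoS.
have H1 := M _ _ Hi Hk. have H2 := M _ _ Hk Hi.
have H3 := M _ _ Hi Hj. have H4 := M _ _ Hj Hi.
have H5 := M _ _ Hk Hj. have H6 := M _ _ Hj Hk.
have := ltn_ord (nth x s i); have := ltn_ord (nth x s j); have := ltn_ord (nth x s (i.+1 %% size s)).
case: (ltnP i.+1 (size s)) => Hm.
  rewrite modn_small // in H1 H2 H5 H6 *.
  split; first lia.
  move: H1 H2 H3 H4 H5 H6.
  set a := nth x s i; set b := nth x s j; set c := nth x s i.+1; clearbody a b c i j; have := ltn_ord a; have := ltn_ord b; have := ltn_ord c.
  case: (leqP a b); case: (leqP a c); lia.
have E : i.+1 = size s by lia.
rewrite E modnn in H1 H2 H5 H6 *.
split; first lia.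
move: H1 H2 H3 H4 H5 H6.
set a := nth x s i; set b := nth x s j; set c := nth x s 0; clearbody a b c i j; have := ltn_ord a; have := ltn_ord b; have := ltn_ord c.
case: (leqP a b); case: (leqP a c); lia.
Qed.

Ltac split_ifs := repeat (match goal with |- context[if ?c then _ else _] => let H := fresh "Hif" in case: ifP => H end).

Lemma dist_inj2 n (x y1 y2 : 'I_n) : dist x y1 = dist x y2 -> y1 = y2.
Proof.
rewrite !distE => H; apply: val_inj => /=; move: H.
have := ltn_ord x; have := ltn_ord y1; have := ltn_ord y2.
split_ifs; lia.
Qed.
Lemma dist_inj1 n (x1 x2 y : 'I_n) : dist x1 y = dist x2 y -> x1 = x2.
Proof.
rewrite !distE => H; apply: val_inj => /=; move: H.
have := ltn_ord x1; have := ltn_ord x2; have := ltn_ord y.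
split_ifs; lia.
Qed.
Lemma dist_lt n (x y : 'I_n) : dist x y < n.
Proof. rewrite distE; have := ltn_ord x; have := ltn_ord y; split_ifs; lia. Qed.
Lemma dist0 n (x y : 'I_n) : (dist x y == 0) = (x == y).
Proof.
rewrite distE -val_eqE /=; have := ltn_ord x; have := ltn_ord y; split_ifs; lia.
Qed.

Lemma csucc_unique n (S : {set 'I_n}) x c : x \in S -> c \in S ->
  (forall z, z \in S -> z != x -> c != x /\ dist x c <= dist x z) -> c = csucc S x.
Proof.
move=> xS cS H.
have sS := csucc_in xS.
case: (eqVneq (csucc S x) x) => Hs.
  rewrite Hs; apply/eqP; apply/negPn/negP => cx.
  by have [] := csucc_min xS cS cx; rewrite Hs eqxx.
have [H1 H2] := H _ sS Hs.
have [_ H3] := csucc_min xS cS H1.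
by apply: (@dist_inj2 _ x); apply/eqP; rewrite eqn_leq H2 H3.
Qed.

Lemma csucc_rem n (S : {set 'I_n}) v x : v \in S -> x \in S -> x != v ->
  csucc (S :\ v) x = if csucc S x == v then csucc S v else csucc S x.
Proof.
move=> vS xS xv.
have [sv _] := csucc_min vS xS xv.
have xS' : x \in S :\ v by rewrite !inE xv.
apply: esym; apply: csucc_unique => //.
  case: ifP => H; rewrite !inE.
    by rewrite sv csucc_in.
  by rewrite H csucc_in.
move=> z; rewrite !inE => /andP [zv zS] zx.
case: (eqVneq (csucc S x) v) => Hs; last first.
  exact: csucc_min.
have [_ h1] := csucc_min xS zS zx.
have [_ h2] := csucc_min vS zS zv.
rewrite Hs in h1.
have cS := csucc_in vS.
case: (eqVneq (csucc S v) x) => cx.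
  exfalso; rewrite cx in h2; move: h1 h2.
  rewrite !distE; have := ltn_ord x; have := ltn_ord v; have := ltn_ord z.
  move: zv zx xv; rewrite -!val_eqE /=. split_ifs; lia.
have cv : csucc S v != v by [].
have [_ h3] := csucc_min xS cS cx.
rewrite Hs in h3; split => //.
move: h1 h2 h3; rewrite !distE.
have := ltn_ord x; have := ltn_ord v; have := ltn_ord z; have := ltn_ord (csucc S v).
move: zv zx xv cv cx; rewrite -!val_eqE /=. split_ifs; lia.
Qed.

Lemma cpred_rem n (S : {set 'I_n}) v y : v \in S -> y \in S -> y != v ->
  cpred (S :\ v) y = if cpred S y == v then cpred S v else cpred S y.
Proof.
move=> vS yS yv.
have [sv _] := csucc_min vS yS yv.
suff [cS' Hc] : (if cpred S y == v then cpred S v else cpred S y) \in S :\ v /\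
   csucc (S :\ v) (if cpred S y == v then cpred S v else cpred S y) = y.
  by rewrite -{1}Hc cpred_csucc.
case: (eqVneq (cpred S y) v) => Hp.
  have pv : cpred S v != v.
    by apply: contra sv => /eqP E; rewrite -[X in csucc S X]E csucc_cpred.
  have pS := cpred_in vS.
  rewrite !inE pv pS; split => //.
  by rewrite csucc_rem // csucc_cpred eqxx -Hp csucc_cpred.
have pS := cpred_in yS.
rewrite !inE Hp pS; split => //.
by rewrite csucc_rem // csucc_cpred (negbTE yv).
Qed.

Lemma cyclic_rem n (E : rel 'I_n) (S : {set 'I_n}) v :
  cyclic_graph E S -> v \in S -> cyclic_graph E (S :\ v).
Proof.
move=> Hc vS x y; rewrite !inE => /andP [xv xS] /andP [yv yS] Exy.
rewrite csucc_rem // cpred_rem //.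
have wS := csucc_in vS.
case: (Hc x y xS yS Exy) => [Ey | [E1 E2]].
  by left; rewrite -Ey (negbTE yv).
case: (eqVneq (csucc S x) v) => Hs.
  case: (eqVneq y (csucc S v)) => Hy; first by left.
  right; split.
    case: (eqVneq (cpred S y) v) => Hp //.
    by case/eqP: Hy; rewrite -Hp csucc_cpred.
  rewrite Hs in E2.
  case: (Hc v y vS yS E2) => [Hy'|[]] //.
  by rewrite Hy' eqxx in Hy.
right; split => //.
case: (eqVneq (cpred S y) v) => Hp //.
rewrite Hp in E1.
case: (Hc x v xS vS E1) => [Hv|[]] //.
by rewrite Hv eqxx in Hs.
Qed.

Lemma cyc_setT n : cyc_seq [set: 'I_n] = enum 'I_n.
Proof.
rewrite /cyc_seq (@eq_filter _ _ predT) ?filter_predT // => z; by rewrite in_setT.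
Qed.
Lemma sc_val n (x : 'I_n) : nat_of_ord (csucc [set: 'I_n] x) = if x.+1 < n then x.+1 else 0.
Proof.
have Hx := ltn_ord x.
rewrite /csucc cyc_setT -{1}(nth_ord_enum x x) next_nth_uniq ?enum_uniq ?size_enum_ord //.
have Hm : x.+1 %% n < n by apply: ltn_pmod; lia.
rewrite /= nth_enum_ord //.
case: ifP => H; first by rewrite modn_small.
have -> : x.+1 = n by lia.
by rewrite modnn.
Qed.
Lemma sc_mod n (x : 'I_n) : nat_of_ord (csucc [set: 'I_n] x) = x.+1 %% n.
Proof.
rewrite sc_val; have Hx := ltn_ord x.
case: ifP => H; first by rewrite modn_small.
have -> : x.+1 = n by lia.
by rewrite modnn.
Qed.
Lemma pc_val n (x : 'I_n) : nat_of_ord (cpred [set: 'I_n] x) = if 0 < x then x.-1 else n.-1.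
Proof.
have Hx := ltn_ord x.
have [i Hi] : exists i : 'I_n, x = csucc [set: 'I_n] i.
  by exists (cpred [set: 'I_n] x); rewrite csucc_cpred.
rewrite Hi cpred_csucc sc_val; have := ltn_ord i.
case: (ltnP i.+1 n) => H /=; lia.
Qed.

Section Core.
Variable n : nat.
Variable E : rel 'I_n.+1.
Hypothesis Hd : digraph E.
Hypothesis Hc : cyclic_graph E [set: 'I_n.+1].
Local Notation sc := (csucc [set: 'I_n.+1]).
Local Notation pc := (cpred [set: 'I_n.+1]).

Lemma noloop x : ~~ E x x.
Proof. by case: Hd. Qed.

Lemma dist_sc x y : 0 < dist x y -> dist (sc x) y = (dist x y).-1.
Proof.
have h := sc_val x; move: (sc x) h => s h.
rewrite !distE; move: h; have := ltn_ord x; have := ltn_ord y; have := ltn_ord s.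
split_ifs; lia.
Qed.
Lemma dist_pc x y : 0 < dist x y -> dist x (pc y) = (dist x y).-1.
Proof.
have h := pc_val y; move: (pc y) h => s h.
rewrite !distE; move: h; have := ltn_ord x; have := ltn_ord y; have := ltn_ord s.
split_ifs; lia.
Qed.

Lemma P1 x y : E x y -> 1 < dist x y -> E (sc x) y /\ E x (pc y).
Proof.
move=> Exy Hxy.
case: (Hc (in_setT x) (in_setT y) Exy) => [Ey|[]]; last by [].
move: Hxy; rewrite Ey.
have h := sc_val x; move: (sc x) h => s h.
rewrite !distE; move: h; have := ltn_ord x; have := ltn_ord s.
split_ifs; lia.
Qed.

Lemma P2 y : forall d x z, E x y -> dist x y = d -> 0 < dist z y <= d -> E z y.
Proof.
elim=> [|d IH] x z Exy Dxy Hz; first by lia.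
case: (eqVneq (dist z y) d.+1) => Hzd.
  by have -> : z = x by apply: (@dist_inj1 _ _ _ y); rewrite Hzd Dxy.
have h : 1 < dist x y by lia.
have [h1 _] := P1 Exy h.
apply: (IH (sc x)) => //; last by lia.
rewrite dist_sc; lia.
Qed.

Definition D y := \max_(w | E w y) dist w y.

Lemma Dex y : 0 < D y -> exists w, E w y /\ dist w y = D y.
Proof.
rewrite /D; case: (pickP (fun w => E w y)) => [w0 Hw0 | H0].
  rewrite (@bigmax_eq_arg _ w0 (fun w => E w y) (fun w => dist w y) Hw0) => _.
  case: arg_maxnP => // j Pj _. by exists j.
by rewrite big_pred0.
Qed.

Lemma Dchar w y : E w y = (0 < dist w y <= D y).
Proof.
apply/idP/idP.
  move=> Ewy; apply/andP; split.
    rewrite lt0n dist0; apply/eqP => wy; rewrite wy in Ewy.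
    by rewrite (negbTE (noloop y)) in Ewy.
  exact: (@leq_bigmax_cond _ (fun w => E w y) (fun w => dist w y) w Ewy).
move=> /andP [h1 h2].
have [w0 [E0 D0]] := Dex (leq_trans h1 h2).
apply: (P2 E0 D0). by rewrite h1 h2.
Qed.

Lemma D_lt y : D y < n.+1.
Proof.
have : D y <= n by apply/bigmax_leqP => i _; have := dist_lt i y; lia.
lia.
Qed.

Hypothesis Hnd : forall v, ~ dominated E [set: 'I_n.+1] v.

Lemma Dstep v : D (sc v) <= D v.
Proof.
have H1 : D (sc v) <= (D v).+1.
  case: (ltnP 1 (D (sc v))) => h; last by lia.
  have h0 : 0 < D (sc v) by lia.
  have [w [Ew Dw]] := Dex h0.
  have h2 : 1 < dist w (sc v) by rewrite Dw.
  have [_ Ew'] := P1 Ew h2.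
  have h3 := dist_pc (_ : 0 < dist w (sc v)).
  rewrite cpred_csucc in Ew' h3.
  have := Dchar w v; rewrite Ew' => /esym/andP [_].
  rewrite h3; lia.
case: (ltngtP (D (sc v)) (D v).+1) => h; [by lia | by lia | ].
exfalso; apply: (@Hnd v); split; first exact: in_setT.
apply/setP => y; rewrite !inE !Dchar h.
have := D_lt (sc v); rewrite h.
move: (D v) => k.
have hs := sc_val v; move: (sc v) hs => s hs.
rewrite -val_eqE /= !distE; move: hs.
have := ltn_ord v; have := ltn_ord y; have := ltn_ord s.
split_ifs; lia.
Qed.

Lemma sc_inord j : j < n -> sc (inord j) = inord j.+1.
Proof.
move=> Hj; apply: val_inj; rewrite /= sc_val !inordK; try lia.
by case: ifP => //; lia.
Qed.

Lemma Dle j i : i <= j -> j <= n -> D (inord j) <= D (inord i).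
Proof.
elim: j => [|j IH] Hij Hj.
  by have -> : i = 0 by lia.
case: (eqVneq i j.+1) => [->//|ne].
rewrite -sc_inord; last by lia.
apply: leq_trans (Dstep _) (IH _ _); lia.
Qed.

Lemma Dconst v : D v = D ord0.
Proof.
have e0 : inord 0 = ord0 :> 'I_n.+1 by apply: val_inj; rewrite /= inordK.
apply/eqP; rewrite eqn_leq; apply/andP; split.
  have := @Dle v 0 (leq0n _) (_ : v <= n); rewrite inord_val e0; apply.
  by have := ltn_ord v; lia.
have -> : ord0 = sc (inord n) :> 'I_n.+1.
  by apply: val_inj; rewrite /= sc_val inordK // ltnn.
apply: leq_trans (Dstep _) _.
have := @Dle n v (_ : v <= n) (leqnn n); rewrite inord_val; apply.
by have := ltn_ord v; lia.
Qed.

Lemma core : exists k, 2 * k < n.+1 /\ forall x y, E x y = circ k x y.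
Proof.
exists (D ord0); split; last first.
  by move=> x y; rewrite Dchar Dconst.
case: (ltnP (2 * D ord0) n.+1) => // hk; exfalso.
have hD := D_lt ord0.
set k := D ord0 in hk hD.
pose y : 'I_n.+1 := inord k.
have Hy : y = k :> nat by rewrite /y inordK.
have E1 : E ord0 y.
  rewrite Dchar (Dconst y) -/k distE Hy /=; apply/andP; split; lia.
have E2 : E y ord0.
  rewrite Dchar -/k distE Hy /=; case: ifP => h; apply/andP; split; lia.
by have := (proj2 Hd) _ _ E1; rewrite E2.
Qed.
End Core.

Lemma part1_gen n (E : rel 'I_n) (S : {set 'I_n}) x0 : x0 \in S -> digraph E ->
  cyclic_graph E S -> (forall v, ~ dominated E S v) ->
  exists m k (f : 'I_m -> 'I_n), 2 * k < m /\ injective f /\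
    S = [set f i | i : 'I_m] /\ forall i j, E (f i) (f j) = circ k i j.
Proof.
move=> x0S Hd Hc Hnd.
have Us := uniqS S.
have x0s : x0 \in cyc_seq S by rewrite memS.
set s := cyc_seq S in Us x0s.
case Em : (size s) => [|m].
  by move: x0s; case: s Em Us => // .
pose g (i : 'I_m.+1) : 'I_n := nth x0 s i.
have g_in i : g i \in S by rewrite -memS mem_nth // Em.
have g_inj : injective g.
  move=> i j /eqP; rewrite /g nth_uniq ?Em // => /eqP; apply: val_inj.
have g_surj y : y \in S -> exists i, g i = y.
  rewrite -memS -/s => ys; exists (inord (index y s)).
  by rewrite /g inordK -?Em ?index_mem // nth_index.
have g_succ i : csucc S (g i) = g (csucc [set: 'I_m.+1] i).
  by rewrite /csucc -/s /g next_nth_uniq ?Em // -sc_mod.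
have g_pred i : cpred S (g i) = g (cpred [set: 'I_m.+1] i).
  by rewrite -{1}(csucc_cpred [set: 'I_m.+1] i) -g_succ cpred_csucc.
pose E' := fun i j => E (g i) (g j).
have Hd' : digraph E'.
  by split => [x|x y]; rewrite /E'; [apply: (proj1 Hd) | apply: (proj2 Hd)].
have Hc' : cyclic_graph E' [set: 'I_m.+1].
  move=> i j _ _; rewrite /E' => Eij.
  case: (Hc _ _ (g_in i) (g_in j) Eij) => [|[]].
    by rewrite g_succ => /g_inj ->; left.
  by rewrite g_succ g_pred => ? ?; right.
have Hnd' : forall v, ~ dominated E' [set: 'I_m.+1] v.
  move=> i [_ Hi]; apply: (Hnd (g i)); split; first exact: g_in.
  apply/setP => y; rewrite !inE.
  case yS : (y \in S) => /=; last first.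
    rewrite orbF; apply/esym/negbTE; apply: contraFN yS => /eqP ->; exact: g_in.
  have [j <-] := g_surj y yS.
  move/setP: Hi => /(_ j); rewrite !inE /E' /= => Hj.
  by rewrite (inj_eq g_inj) g_succ Hj.
have [k [hk hE]] := core Hd' Hc' Hnd'.
exists m.+1, k, g; split => //; split => //; split => //.
apply/setP => y; apply/idP/imsetP.
  by move=> /g_surj [i <-]; exists i.
by case=> i _ ->.
Qed.

Lemma dom_nontriv n (E : rel 'I_n) (S : {set 'I_n}) v : digraph E ->
  dominated E S v -> exists w, (w \in S) && (w != v).
Proof.
move=> Hd [vS Hv].
case: (eqVneq (csucc S v) v) => Hs.
  move/setP: Hv => /(_ v); rewrite Hs !inE eqxx orTb /= => /andP [_ Evv].
  by case: Hd => /(_ v); rewrite Evv.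
by exists (csucc S v); rewrite csucc_in.
Qed.

Lemma dism_exists n (E : rel 'I_n) : digraph E -> forall N (S : {set 'I_n}),
  #|S| <= N -> (exists x, x \in S) -> cyclic_graph E S ->
  exists T, dismantles E S T /\ (exists x, x \in T) /\ cyclic_graph E T /\
     (forall v, ~ dominated E T v).
Proof.
move=> Hd; elim=> [|N IH] S HS [x xS] Hc.
  by move: HS; rewrite leqn0 => /eqP /card0_eq /(_ x); rewrite xS.
case: (classic (exists v, dominated E S v)) => [[v Hv]|Hno]; last first.
  exists S; split; first exact: dism_refl.
  split; first by exists x.
  by split => // v Hv; apply: Hno; exists v.
have [w /andP [wS wv]] := dom_nontriv Hd Hv.
have vS := proj1 Hv.
have HS' : #|S :\ v| <= N.
  by move: HS; rewrite (cardsD1 v S) vS.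
have wS' : w \in S :\ v by rewrite !inE wv.
have [T [dT rest]] := IH (S :\ v) HS' (ex_intro _ w wS') (cyclic_rem Hc vS).
by exists T; split => //; apply: dism_step Hv dT.
Qed.

Theorem proposition3p12 (n : nat) (E : rel 'I_n) :
  0 < n -> digraph E -> cyclic_graph E [set: 'I_n] ->
  ((forall v, ~ dominated E [set: 'I_n] v) ->
     exists k, 2 * k < n /\
       exists f : 'I_n -> 'I_n, bijective f /\
         forall x y, E x y = circ k (f x) (f y))
  /\
  (exists S : {set 'I_n}, dismantles E [set: 'I_n] S /\
     exists m k (f : 'I_m -> 'I_n), 2 * k < m /\ injective f /\
       S = [set f i | i : 'I_m] /\
       forall i j, E (f i) (f j) = circ k i j).
Proof.
move=> Hn Hd Hc; split.
  case: n E Hn Hd Hc => [|n] // E _ Hd Hc Hnd.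
  have [k [hk hE]] := core Hd Hc Hnd.
  exists k; split => //; exists id; split; first by exists id.
  exact: hE.
have x0 : 'I_n by exists 0.
have [T [dT [[x xT] [cT nT]]]] :=
  dism_exists Hd (leqnn #|[set: 'I_n]|) (ex_intro _ x0 (in_setT x0)) Hc.
have [m [k [f H]]] := part1_gen xT Hd cT nT.
by exists T; split => //; exists m, k, f.
Qed.
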